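(* For $m=1,\dots,N$ let $\mathcal{E}^{(m)}=\{\sigma^{(m)}_i,q^{(m)}_i\}_{i=1}^{k_m}$ be an ensemble of states on a finite-dimensional space $\mathcal H_m$, and let $\{\Pi^{(m)}_i\}_{i=1}^{k_m}$ be a POVM attaining the optimal minimum-error success probability for $\mathcal E^{(m)}$. Then the product POVM $\{\Pi^{(1)}_{i_1}\otimes\cdots\otimes\Pi^{(N)}_{i_N}\}$ attains the optimal minimum-error success probability for the product ensemble $\{\sigma^{(1)}_{i_1}\otimes\cdots\otimes\sigma^{(N)}_{i_N},\,q^{(1)}_{i_1}\cdots q^{(N)}_{i_N}\}$ on $\mathcal H_1\otimes\cdots\otimes\mathcal H_N$. Consequently the product ensemble can be optimally distinguished by $N$-party LOCC (each party $m$ measuring $\{\Pi^{(m)}_i\}$ locally).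
   Context: For an ensemble $\{\rho_i,p_i\}$, the success probability of a POVM $\{\Pi_i\}$ is $\sum_ip_i\,\mathrm{tr}(\Pi_i\rho_i)$; the optimal minimum-error success probability is its maximum over all POVMs with the same index set. Party $m$ holds system $\mathcal H_m$. *)

(* Defs.v *)
From HB Require Import structures.
From mathcomp Require Import all_boot all_order all_algebra all_field.
Set Implicit Arguments. Unset Strict Implicit. Unset Printing Implicit Defensive.
Import Order.TTheory GRing.Theory Num.Theory.
Local Open Scope ring_scope.

(* Operators on the Hilbert space C^T, T a finite type (a finite orthonormal
   basis), written as their matrices in that basis. *)
Definition op (T : finType) := T -> T -> algC.

Definition psd (T : finType) (A : op T) : Prop :=
  forall v : T -> algC, 0 <= \sum_(x : T) \sum_(y : T) (v x)^* * A x y * v y.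

Definition trace (T : finType) (A : op T) : algC := \sum_(x : T) A x x.

Definition mulop (T : finType) (A B : op T) : op T :=
  fun x y => \sum_(z : T) A x z * B z y.

Definition is_state (T : finType) (A : op T) : Prop := psd A /\ trace A = 1.

Definition is_ensemble (I T : finType) (rho : I -> op T) (p : I -> algC) : Prop :=
  (forall i, is_state (rho i)) /\ (forall i, 0 <= p i) /\ \sum_(i : I) p i = 1.

Definition is_povm (I T : finType) (Pi : I -> op T) : Prop :=
  (forall i, psd (Pi i)) /\
  (forall x y : T, \sum_(i : I) Pi i x y = (x == y)%:R).

Definition success (I T : finType) (rho : I -> op T) (p : I -> algC)
  (Pi : I -> op T) : algC :=
  \sum_(i : I) p i * trace (mulop (Pi i) (rho i)).

Definition optimal_povm (I T : finType) (rho : I -> op T) (p : I -> algC)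
  (Pi : I -> op T) : Prop :=
  is_povm Pi /\
  forall Pi' : I -> op T, is_povm Pi' -> success rho p Pi' <= success rho p Pi.

(* N parties; party m has space C^(d m) and ensemble index set 'I_(k m). *)
Definition prodspace (N : nat) (d : 'I_N -> nat) : finType :=
  {dffun forall m : 'I_N, 'I_(d m)}.

Definition tensop (N : nat) (d : 'I_N -> nat)
  (A : forall m : 'I_N, op 'I_(d m)) : op (prodspace d) :=
  fun x y => \prod_(m : 'I_N) A m (x m) (y m).

(* Main.v *)
Require Import Defs.
From HB Require Import structures.
From mathcomp Require Import all_boot all_order all_algebra all_field.
From mathcomp Require Import ring spectral.
Set Implicit Arguments. Unset Strict Implicit. Unset Printing Implicit Defensive.
Import Order.TTheory GRing.Theory Num.Theory.
Local Open Scope ring_scope.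
Lemma prod_sum_dffun (I : finType) (T_ : I -> finType) (F : forall i, T_ i -> algC) :
  \prod_(i : I) \sum_(j : T_ i) F i j = \sum_(f : {dffun forall i, T_ i}) \prod_(i : I) F i (f i).
Proof.
transitivity (\sum_(t : fprod T_) \prod_(i in I) [ffun j => F i j] (t i)).
  rewrite (@big_fprod algC 0 1 *%R +%R I T_ (fun i => [ffun j => F i j])).
  rewrite -(bigA_distr_big_dep _ (fun i j => untag 0 [ffun j => F i j] j)); apply: eq_bigr => i _.
  rewrite -(@big_tag algC 0 +%R I T_ (fun i => [ffun j => F i j]) i).
  by apply: eq_bigr => j _; rewrite ffunE.
rewrite (reindex (@dffun_of_fprod I T_)); last by apply: onW_bij; exact: dffun_of_fprod_bij.
by apply: eq_bigr => t _; apply: eq_bigr => i _; rewrite !ffunE.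
Qed.

Definition form (T : finType) (A : op T) (v : T -> algC) : algC :=
  \sum_(x : T) \sum_(y : T) (v x)^* * A x y * v y.

Definition sosF (T K : finType) (w : K -> T -> algC) (A : op T) : Prop :=
  forall x y, A x y = \sum_(k : K) w k x * (w k y)^*.

Lemma sosF_psd (T K : finType) (w : K -> T -> algC) (A : op T) :
  sosF w A -> psd A.
Proof.
move=> hA v.
under eq_bigr do under eq_bigr do rewrite hA mulr_sumr mulr_suml.
under eq_bigr do rewrite exchange_big.
rewrite exchange_big /=; apply: sumr_ge0 => k _.
have -> : \sum_(x : T) \sum_(y : T) (v x)^* * (w k x * (w k y)^*) * v y
   = (\sum_(x : T) (v x)^* * w k x) * (\sum_(x : T) (v x)^* * w k x)^*.
  rewrite rmorph_sum big_distrlr /=; apply: eq_bigr => x _; apply: eq_bigr => y _.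
  by rewrite rmorphM /= conjCK; ring.
exact: mul_conjC_ge0.
Qed.

Lemma tr_psd_sosF (T K : finType) (w : K -> T -> algC) (P A : op T) :
  psd P -> sosF w A -> 0 <= trace (mulop P A).
Proof.
move=> hP hA; rewrite /trace /mulop.
under eq_bigr do under eq_bigr do rewrite hA mulr_sumr.
under eq_bigr do rewrite exchange_big.
rewrite exchange_big /=; apply: sumr_ge0 => k _.
have -> : \sum_(x : T) \sum_(z : T) P x z * (w k z * (w k x)^*)
   = \sum_(x : T) \sum_(y : T) (w k x)^* * P x y * w k y.
  by apply: eq_bigr => x _; apply: eq_bigr => y _; ring.
exact: hP.
Qed.

Lemma sosF_tens (N : nat) (d : 'I_N -> nat) (K : 'I_N -> finType)
  (w : forall m, K m -> 'I_(d m) -> algC) (A : forall m : 'I_N, op 'I_(d m)) :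
  (forall m, sosF (w m) (A m)) ->
  sosF (fun (kk : {dffun forall m, K m}) (x : prodspace d) => \prod_(m : 'I_N) w m (kk m) (x m))
       (tensop A).
Proof.
move=> hA x y; rewrite /tensop.
under eq_bigr do rewrite hA.
rewrite prod_sum_dffun; apply: eq_bigr => kk _.
by rewrite rmorph_prod big_split.
Qed.
Lemma sum_delta (T : finType) (x : T) (f : T -> algC) :
  \sum_(s : T) (s == x)%:R * f s = f x.
Proof.
rewrite (bigD1 x) //= eqxx mul1r big1 ?addr0 // => s /negbTE ->; by rewrite mul0r.
Qed.

Lemma sum_delta2 (T : finType) (x y : T) (F : T -> T -> algC) :
  \sum_(i : T) \sum_(j : T) (i == x)%:R * ((j == y)%:R * F i j) = F x y.
Proof.
under eq_bigr do rewrite -mulr_sumr sum_delta.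
exact: (sum_delta x (fun i => F i y)).
Qed.

Lemma form2 (T : finType) (A : op T) (x y : T) (a b : algC) :
  form A (fun s => a * (s == x)%:R + b * (s == y)%:R) =
  a^* * a * A x x + a^* * b * A x y + b^* * a * A y x + b^* * b * A y y.
Proof.
rewrite /form.
have E : forall s, (a * (s == x)%:R + b * (s == y)%:R)^* =
    (s == x)%:R * a^* + (s == y)%:R * b^*.
  by move=> s; rewrite rmorphD !rmorphM /= !conjC_nat; ring.
transitivity (\sum_(i : T) \sum_(j : T) ((i == x)%:R * ((j == x)%:R * (a^* * a * A i j))
   + (i == x)%:R * ((j == y)%:R * (a^* * b * A i j))
   + (i == y)%:R * ((j == x)%:R * (b^* * a * A i j))
   + (i == y)%:R * ((j == y)%:R * (b^* * b * A i j)))).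
  by apply: eq_bigr => i _; apply: eq_bigr => j _; rewrite E; ring.
under eq_bigr do rewrite !big_split /=.
by rewrite !big_split /= !sum_delta2.
Qed.

Lemma psd_herm (T : finType) (A : op T) : psd A -> forall x y, A y x = (A x y)^*.
Proof.
move=> hA x y.
have R1 : forall z, A z z \is Num.real.
  move=> z; have := hA (fun s => 1 * (s == z)%:R + 0 * (s == z)%:R).
  rewrite -/(form A _) form2 rmorph1 rmorph0 ?mul1r ?mul0r ?mulr0 ?addr0 ?add0r.
  exact: ger0_real.
have R2 : A x y + A y x \is Num.real.
  have := hA (fun s => 1 * (s == x)%:R + 1 * (s == y)%:R).
  rewrite -/(form A _) form2 rmorph1 !mul1r => /ger0_real.
  have -> : A x x + A x y + A y x + A y y = (A x y + A y x) + (A x x + A y y) by ring.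
  by rewrite rpredDr // rpredD.
have R3 : 'i * A x y - 'i * A y x \is Num.real.
  have := hA (fun s => 1 * (s == x)%:R + 'i * (s == y)%:R).
  rewrite -/(form A _) form2 rmorph1 !mul1r conjCi => /ger0_real.
  have -> : A x x + 'i * A x y + - 'i * 1 * A y x + - 'i * 'i * A y y =
    ('i * A x y - 'i * A y x) + (A x x - 'i * 'i * A y y) by ring.
  rewrite rpredDr //; rewrite -expr2 sqrCi; apply: rpredB; first exact: R1.
  by rewrite mulN1r rpredN.
set s1 := A x y + A y x in R2; set s2 := 'i * A x y - 'i * A y x in R3.
have hi : 'i * 'i = -1 :> algC by rewrite -expr2 sqrCi.
have eY : A y x = (s1 + 'i * s2) / 2.
  rewrite /s1 /s2.
  have -> : A x y + A y x + 'i * ('i * A x y - 'i * A y x) =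
    A x y + A y x + ('i * 'i) * A x y - ('i * 'i) * A y x by ring.
  by rewrite hi; field.
have eX : A x y = (s1 - 'i * s2) / 2.
  rewrite /s1 /s2.
  have -> : A x y + A y x - 'i * ('i * A x y - 'i * A y x) =
    A x y + A y x - ('i * 'i) * A x y + ('i * 'i) * A y x by ring.
  by rewrite hi; field.
rewrite eY eX rmorphM rmorphB rmorphM /= conjCi.
rewrite (CrealP R2) (CrealP R3) fmorphV /= conjC_nat; ring.
Qed.
Definition mx (n : nat) (A : op 'I_n) : 'M[algC]_n := \matrix_(i, j) A i j.

Definition sqfam (n : nat) (A : op 'I_n) : 'I_n -> 'I_n -> algC :=
  fun j x => sqrtC (spectral_diag (mx A) 0 j) * ((spectralmx (mx A)) j x)^*.

Lemma psd_sosF (n : nat) (A : op 'I_n) : psd A -> sosF (sqfam A) A.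
Proof.
move=> hA.
have hM : mx A \is normalmx.
  have hH : (mx A ^t*)%sesqui = mx A.
    apply/matrixP => i j; rewrite !mxE; exact/esym/psd_herm.
  by apply/normalmxP; rewrite hH.
have /orthomx_spectralP eM := hM.
rewrite invmx_unitary ?spectral_unitarymx // in eM.
have hU := unitarymxP (spectral_unitarymx (mx A)).
rewrite /sqfam.
set P := spectralmx (mx A) in eM hU *.
set D := spectral_diag (mx A) in eM *.
have eD : diag_mx D = P *m mx A *m (P ^t*)%sesqui.
  by rewrite {1}eM !mulmxA hU mul1mx -mulmxA hU mulmx1.
have Dge0 : forall j, 0 <= D 0 j.
  move=> j; have := congr1 (fun M : 'M_n => M j j) eD; rewrite /= mxE eqxx mulr1n => ->.
  rewrite mxE.
  have -> : \sum_(y < n) (P *m mx A) j y * (P ^t*)%sesqui y j =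
     form A (fun y => (P j y)^*).
    rewrite /form exchange_big /=; apply: eq_bigr => y _.
    rewrite !mxE mulr_suml; apply: eq_bigr => x _.
    by rewrite !mxE conjCK.
  exact: hA.
move=> x y.
have := congr1 (fun M : 'M_n => M x y) eM; rewrite /= !mxE => ->.
apply: eq_bigr => j _.
rewrite mul_mx_diag !mxE rmorphM /= conjCK [(sqrtC _)^*]geC0_conj ?sqrtC_ge0 //.
have : sqrtC (D 0 j) * sqrtC (D 0 j) = D 0 j by rewrite -expr2 sqrtCK.
move=> h; rewrite -[in LHS]h; ring.
Qed.

Lemma psd_sos_tens (N : nat) (d : 'I_N -> nat) (A : forall m : 'I_N, op 'I_(d m)) :
  (forall m, psd (A m)) ->
  sosF (fun (kk : {dffun forall m, 'I_(d m)}) (x : prodspace d) =>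
          \prod_(m : 'I_N) sqfam (A m) (kk m) (x m)) (tensop A).
Proof. by move=> hA; apply: (@sosF_tens N d (fun m => 'I_(d m)) (fun m => sqfam (A m))) => m; apply: psd_sosF. Qed.
Lemma lim0 (u w b : algC) : 0 < b ->
  (forall c, 0 < c -> c <= b -> c * u + c ^+ 2 * w <= 0) -> u <= 0.
Proof.
move=> b0 H.
have b20 : 0 < b / 2 by rewrite divr_gt0 // ltr0n.
have b2b : b / 2 <= b by rewrite ler_pdivrMr ?ltr0n // ler_pMr // ler1n.
have F1 := H b b0 (lexx b).
have F2 := H (b / 2) b20 b2b.
have rb : b \is Num.real := gtr0_real b0.
have r1 := ler0_real F1. have r2 := ler0_real F2.
have bn0 : b != 0 by rewrite gt_eqF.
have ru : u \is Num.real.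
  have -> : u = (4%:R * ((b / 2) * u + (b / 2) ^+ 2 * w) - (b * u + b ^+ 2 * w)) / b.
    by field.
  by rewrite rpredM ?rpredV // rpredB // rpredM // realn.
have rw : w \is Num.real.
  have -> : w = 2%:R * ((b * u + b ^+ 2 * w) - 2%:R * ((b / 2) * u + (b / 2) ^+ 2 * w)) / b ^+ 2.
    by field.
  by rewrite rpredM ?rpredV ?rpredX // rpredM ?realn // rpredB // rpredM ?realn.
rewrite real_leNgt ?real0 //; apply/negP => u0.
have [w0|w0] := real_leP (real0 _) rw.
  move: F1; apply/negP; rewrite -real_ltNge ?real0 ?rpredD ?rpredM ?rpredX //.
  apply: (lt_le_trans (y := b * u)); first by rewrite mulr_gt0.
  by rewrite lerDl mulr_ge0 // exprn_ge0 // ltW.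
set d := u - b * w.
have d0 : 0 < d.
  rewrite /d subr_gt0; apply: (le_lt_trans (y := 0)) => //.
  by rewrite pmulr_rle0 // ltW.
have dn0 : d != 0 by rewrite gt_eqF.
set c := b * u / d.
have c0 : 0 < c by rewrite divr_gt0 // mulr_gt0.
have cb : c <= b.
  rewrite ler_pdivrMr // ler_pM2l // /d lerDl oppr_ge0 pmulr_rle0 //; exact: ltW.
have := H c c0 cb.
have -> : c * u + c ^+ 2 * w = b * u ^+ 3 / d ^+ 2.
  have ed : w = (u - d) / b by rewrite /d; field.
  rewrite /c; clearbody d; rewrite ed; field.
  by rewrite bn0 dn0.
apply/negP; rewrite -real_ltNge ?real0 //; last first.
  by rewrite rpredM ?rpredV ?rpredX // ?rpredM ?rpredX // gtr0_real.
by rewrite divr_gt0 ?exprn_gt0 // mulr_gt0 // exprn_gt0.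
Qed.
Definition adj (m n : nat) (M : 'M[algC]_(m, n)) : 'M[algC]_(n, m) := (M ^t*)%sesqui.

Lemma adjE (m n : nat) (M : 'M[algC]_(m, n)) i j : adj M i j = (M j i)^*.
Proof. by rewrite /adj !mxE. Qed.

Lemma adjM (m n p : nat) (A : 'M[algC]_(m, n)) (B : 'M[algC]_(n, p)) :
  adj (A *m B) = adj B *m adj A.
Proof. by rewrite /adj trmx_mul map_mxM. Qed.

Lemma adjK (m n : nat) (M : 'M[algC]_(m, n)) : adj (adj M) = M.
Proof. by apply/matrixP => i j; rewrite !adjE conjCK. Qed.

Definition col (n : nat) (v : 'I_n -> algC) : 'cV[algC]_n := \col_i v i.

Lemma mx_mulop (n : nat) (A B : op 'I_n) : mx (mulop A B) = mx A *m mx B.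
Proof. by apply/matrixP => i j; rewrite !mxE; apply: eq_bigr => z _; rewrite !mxE. Qed.

Lemma trace_mx (n : nat) (A : op 'I_n) : trace A = \tr (mx A).
Proof. by apply: eq_bigr => i _; rewrite mxE. Qed.

Lemma mx_fun (n : nat) (M : 'M[algC]_n) : mx (fun x y => M x y) = M.
Proof. by apply/matrixP => i j; rewrite mxE. Qed.

Lemma form_mx (n : nat) (A : op 'I_n) (v : 'I_n -> algC) :
  form A v = (adj (col v) *m mx A *m col v) 0 0.
Proof.
rewrite /form !mxE exchange_big /=; apply: eq_bigr => y _.
rewrite !mxE mulr_suml; apply: eq_bigr => x _.
by rewrite /adj !mxE.
Qed.

Lemma form_col (n : nat) (A : op 'I_n) (u : 'cV[algC]_n) :
  (adj u *m mx A *m u) 0 0 = form A (fun i => u i 0).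
Proof. by rewrite form_mx; congr ((adj _ *m _ *m _) 0 0); apply/colP => i; rewrite mxE. Qed.

Lemma tr11 (M : 'M[algC]_1) : \tr M = M 0 0.
Proof. by rewrite /mxtrace big_ord1. Qed.
Lemma PPlem (n : nat) (u : 'cV[algC]_n) :
  (u *m adj u) *m (u *m adj u) = \tr (u *m adj u) *: (u *m adj u).
Proof.
rewrite mulmxA -(mulmxA u) [adj u *m u]mx11_scalar mul_mx_scalar -scalemxAl.
by rewrite mxtrace_mulC tr11.
Qed.

Lemma SSlem (n : nat) (P : 'M[algC]_n) (a c : algC) : P *m P = a *: P ->
  (1%:M - c *: P) *m (1%:M - c *: P) = 1%:M - (2%:R * c - c ^+ 2 * a) *: P.
Proof.
move=> hP; rewrite mulmxBl mul1mx mulmxBr mulmx1 -scalemxAl -scalemxAr hP.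
by apply/matrixP => i j; rewrite !mxE; ring.
Qed.

Lemma SASlem (n : nat) (P A : 'M[algC]_n) (c : algC) :
  (1%:M - c *: P) *m A *m (1%:M - c *: P) =
  A - c *: (P *m A) - c *: (A *m P) + (c * c) *: (P *m A *m P).
Proof.
rewrite mulmxBl mul1mx -scalemxAl mulmxBr mulmx1 -scalemxAr mulmxBl -scalemxAl.
move: (P *m A) (A *m P) (P *m A *m P) => X Y Z.
by apply/matrixP => i j; rewrite !mxE; ring.
Qed.

Lemma trexp (n : nat) (P A B : 'M[algC]_n) (c t : algC) :
  \tr (((1%:M - c *: P) *m A *m (1%:M - c *: P) + t *: P) *m B) =
  \tr (A *m B) - c * (\tr (P *m A *m B) + \tr (A *m P *m B))
  + c ^+ 2 * \tr (P *m A *m P *m B) + t * \tr (P *m B).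
Proof.
rewrite SASlem !mulmxDl !mulNmx -!scalemxAl !mxtraceD !raddfN /= !mxtraceZ.
ring.
Qed.

Lemma adjS (n : nat) (u : 'cV[algC]_n) (c : algC) : 0 <= c ->
  adj (1%:M - c *: (u *m adj u)) = 1%:M - c *: (u *m adj u).
Proof.
move=> c0; apply/matrixP => i j; rewrite adjE !mxE rmorphB rmorphM /= (geC0_conj c0).
rewrite ?conjC_nat eq_sym !big_ord1 !adjE rmorphM /= conjCK; congr (_ - c * _).
by rewrite mulrC.
Qed.
Definition Hop (n k : nat) (sigma : 'I_k -> op 'I_n) (q : 'I_k -> algC)
  (Pi : 'I_k -> op 'I_n) : op 'I_n :=
  fun x y => (\sum_(j : 'I_k) q j * (mulop (Pi j) (sigma j) x y + mulop (sigma j) (Pi j) x y)) / 2%:R.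

Lemma success_mx (n k : nat) (sigma : 'I_k -> op 'I_n) (q : 'I_k -> algC)
  (Pi : 'I_k -> op 'I_n) :
  success sigma q Pi = \sum_(j : 'I_k) q j * \tr (mx (Pi j) *m mx (sigma j)).
Proof. by apply: eq_bigr => j _; rewrite trace_mx mx_mulop. Qed.

Lemma Hop_trace (n k : nat) (sigma : 'I_k -> op 'I_n) (q : 'I_k -> algC)
  (Pi : 'I_k -> op 'I_n) : trace (Hop sigma q Pi) = success sigma q Pi.
Proof.
rewrite trace_mx success_mx.
have -> : mx (Hop sigma q Pi) = 2%:R^-1 *: \sum_(j : 'I_k) q j *:
    (mx (Pi j) *m mx (sigma j) + mx (sigma j) *m mx (Pi j)).
  apply/matrixP => x y; rewrite !mxE summxE mulrC; congr (_ * _).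
  apply: eq_bigr => j _; rewrite !mxE /mulop; congr (_ * (_ + _)); by apply: eq_bigr => z _; rewrite !mxE.
rewrite mxtraceZ raddf_sum /= mulr_sumr; apply: eq_bigr => j _.
by rewrite mxtraceZ mxtraceD [\tr (mx (sigma j) *m _)]mxtrace_mulC; field.
Qed.
Lemma Hop_psd (n k : nat) (sigma : 'I_k -> op 'I_n) (q : 'I_k -> algC)
  (Pi : 'I_k -> op 'I_n) : optimal_povm sigma q Pi ->
  forall l, psd (fun x y => Hop sigma q Pi x y - q l * sigma l x y).
Proof.
move=> [[PiPsd PiSum] opt] l v.
change (0 <= form (fun x y => Hop sigma q Pi x y - q l * sigma l x y) v).
rewrite form_mx.
set u := col v.
set A := fun j => mx (Pi j).
set B := fun j => mx (sigma j).
set al := \sum_(j : 'I_k) q j * (\tr (u *m adj u *m A j *m B j) + \tr (A j *m (u *m adj u) *m B j)).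
set be := \sum_(j : 'I_k) q j * \tr (u *m adj u *m A j *m (u *m adj u) *m B j).
set ga := q l * \tr (u *m adj u *m B l).
have Hform : (adj u *m mx (fun x y => Hop sigma q Pi x y - q l * sigma l x y) *m u) 0 0
    = al / 2%:R - ga.
  rewrite -tr11 -mxtrace_mulC mulmxA.
  have -> : mx (fun x y => Hop sigma q Pi x y - q l * sigma l x y) =
      2%:R^-1 *: (\sum_(j : 'I_k) q j *: (A j *m B j + B j *m A j)) - q l *: B l.
    apply/matrixP => x y; rewrite !mxE summxE /Hop [_ / 2%:R]mulrC; congr (_ * _ - _).
    apply: eq_bigr => j _; rewrite !mxE /mulop; congr (_ * (_ + _));
    by apply: eq_bigr => z _; rewrite !mxE.
  rewrite mulmxBr -!scalemxAr raddfB /= !mxtraceZ mulmx_sumr raddf_sum /=.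
  rewrite [al / _]mulrC /al /ga; congr (_ * _ - _); apply: eq_bigr => j _.
  rewrite -scalemxAr mxtraceZ mulmxDr mxtraceD !mulmxA.
  by rewrite [\tr (u *m adj u *m B j *m A j)]mxtrace_mulC !mulmxA; field.
rewrite Hform.
set a := \tr (u *m adj u).
have a0 : 0 <= a.
  rewrite /a mxtrace_mulC tr11 mxE; apply: sumr_ge0 => x _.
  by rewrite adjE mulrC mul_conjC_ge0.
have PP : (u *m adj u) *m (u *m adj u) = a *: (u *m adj u) by rewrite PPlem.
have a10 : 0 < a + 1 by rewrite ltr_wpDl.
have key : forall c, 0 < c -> c <= (a + 1)^-1 ->
    c * (2%:R * ga - al) + c ^+ 2 * (be - a * ga) <= 0.
  move=> c c0 cb.
  set e := 2%:R * c - c ^+ 2 * a.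
  have ca : c * a <= 1.
    apply: (le_trans (y := (a + 1)^-1 * a)); first exact: ler_wpM2r.
    by rewrite mulrC -/(_ / _) ler_pdivrMr // mul1r lerDl.
  have e0 : 0 <= e.
    have -> : e = c * (2%:R - c * a) by rewrite /e; ring.
    apply: mulr_ge0; first exact: ltW.
    rewrite subr_ge0; apply: (le_trans ca); by rewrite ler1n.
  pose S := 1%:M - c *: (u *m adj u).
  pose Pi' := fun j : 'I_k => fun x y =>
    (S *m A j *m S + ((j == l)%:R * e) *: (u *m adj u)) x y.
  have pov : is_povm Pi'.
    split.
      move=> j w; change (0 <= form (Pi' j) w).
      rewrite form_mx /Pi' mx_fun mulmxDr mulmxDl mxE; apply: addr_ge0.
        have -> : adj (col w) *m (S *m A j *m S) *m col w =
                  adj (S *m col w) *m A j *m (S *m col w).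
          by rewrite adjM /S adjS ?ltW // !mulmxA.
        by rewrite form_col; apply: PiPsd.
      rewrite -scalemxAr -scalemxAl mxE; apply: mulr_ge0.
        by apply: mulr_ge0 => //; case: (j == l).
      rewrite (mulmxA (adj (col w)) u (adj u)) -(mulmxA _ (adj u) (col w)) -[adj u *m col w]adjK adjM adjK.
      by rewrite mxE big_ord1 adjE mul_conjC_ge0.
    move=> x y.
    rewrite /Pi' -summxE big_split /= -mulmx_suml -mulmx_sumr -scaler_suml.
    rewrite (sum_delta l (fun _ => e)).
    have -> : \sum_(j : 'I_k) A j = 1%:M.
      by apply/matrixP => i j; rewrite summxE !mxE; under eq_bigr do rewrite mxE; apply: PiSum.
    by rewrite mulmx1 /S (SSlem _ PP) -/e subrK mxE.
  have := opt Pi' pov.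
  rewrite !success_mx.
  under eq_bigr do rewrite /Pi' mx_fun trexp -/(B _) -/(A _).
  have -> : \sum_(j : 'I_k) q j * (\tr (A j *m B j)
      - c * (\tr (u *m adj u *m A j *m B j) + \tr (A j *m (u *m adj u) *m B j))
      + c ^+ 2 * \tr (u *m adj u *m A j *m (u *m adj u) *m B j)
      + (j == l)%:R * e * \tr (u *m adj u *m B j)) =
      \sum_(j : 'I_k) q j * \tr (A j *m B j) - c * al + c ^+ 2 * be + e * ga.
    rewrite /al /be /ga.
    transitivity (\sum_(j : 'I_k) (q j * \tr (A j *m B j)
      + (- c) * (q j * (\tr (u *m adj u *m A j *m B j) + \tr (A j *m (u *m adj u) *m B j)))
      + c ^+ 2 * (q j * \tr (u *m adj u *m A j *m (u *m adj u) *m B j))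
      + (j == l)%:R * (e * (q j * \tr (u *m adj u *m B j))))).
      by apply: eq_bigr => j _; ring.
    rewrite !big_split /= -!mulr_sumr sum_delta; ring.
  rewrite -subr_le0 => h; apply: le_trans h; rewrite le_eqVlt; apply/orP; left.
  by apply/eqP; rewrite /e; ring.
have ib : 0 < (a + 1)^-1 by rewrite invr_gt0.
have h := lim0 ib key.
rewrite subr_ge0 ler_pdivlMr ?ltr0n //.
by rewrite -subr_le0 mulrC.
Qed.
Lemma tr_mul_ext (T : finType) (P A B : op T) :
  (forall x y, A x y = B x y) -> trace (mulop P A) = trace (mulop P B).
Proof.
by move=> h; apply: eq_bigr => x _; apply: eq_bigr => z _; rewrite h.
Qed.

Lemma tr_mul_sub (T : finType) (P A B : op T) :
  trace (mulop P A) - trace (mulop P B) = trace (mulop P (fun x y => A x y - B x y)).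
Proof.
rewrite /trace /mulop -sumrB; apply: eq_bigr => x _.
by rewrite -sumrB; apply: eq_bigr => z _; rewrite mulrBr.
Qed.

Lemma tr_mul_sum (T I : finType) (Pr : pred I) (P : op T) (F : I -> op T) :
  trace (mulop P (fun x y => \sum_(i | Pr i) F i x y)) = \sum_(i | Pr i) trace (mulop P (F i)).
Proof.
rewrite /trace /mulop.
under eq_bigr do under eq_bigr do rewrite mulr_sumr.
under eq_bigr do rewrite exchange_big.
by rewrite exchange_big.
Qed.

Lemma tr_tens (N : nat) (d : 'I_N -> nat) (A : forall m : 'I_N, op 'I_(d m)) :
  trace (tensop A) = \prod_(m : 'I_N) trace (A m).
Proof.
by rewrite /trace /tensop (prod_sum_dffun (fun m j => A m j j)).
Qed.

Lemma tr_tens_mul (N : nat) (d : 'I_N -> nat) (A B : forall m : 'I_N, op 'I_(d m)) :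
  trace (mulop (tensop A) (tensop B)) = \prod_(m : 'I_N) trace (mulop (A m) (B m)).
Proof.
rewrite /trace /mulop /tensop.
rewrite (prod_sum_dffun (fun m j => \sum_z A m j z * B m z j)).
apply: eq_bigr => x _.
rewrite (prod_sum_dffun (fun m z => A m (x m) z * B m z (x m))).
by apply: eq_bigr => z _; rewrite big_split.
Qed.

Lemma psd_scale (T : finType) (c : algC) (A : op T) :
  0 <= c -> psd A -> psd (fun x y => c * A x y).
Proof.
move=> c0 hA v.
have -> : \sum_x \sum_y (v x)^* * (c * A x y) * v y =
    c * \sum_x \sum_y (v x)^* * A x y * v y.
  rewrite mulr_sumr; apply: eq_bigr => x _; rewrite mulr_sumr.
  by apply: eq_bigr => y _; ring.
by apply: mulr_ge0 => //; apply: hA.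
Qed.
Theorem mainTheorem15 (N : nat) (d k : 'I_N -> nat)
  (sigma : forall m : 'I_N, 'I_(k m) -> op 'I_(d m))
  (q : forall m : 'I_N, 'I_(k m) -> algC)
  (Pi : forall m : 'I_N, 'I_(k m) -> op 'I_(d m)) :
  (forall m, is_ensemble (sigma m) (q m)) ->
  (forall m, optimal_povm (sigma m) (q m) (Pi m)) ->
  optimal_povm
    (fun i : {dffun forall m : 'I_N, 'I_(k m)} =>
       tensop (fun m => sigma m (i m)))
    (fun i : {dffun forall m : 'I_N, 'I_(k m)} => \prod_(m : 'I_N) q m (i m))
    (fun i : {dffun forall m : 'I_N, 'I_(k m)} =>
       tensop (fun m => Pi m (i m))).
Proof.
move=> hens hopt.
have PiPsd : forall m j, psd (Pi m j) by move=> m j; case: (hopt m) => [[]].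
have PiSum : forall m x y, \sum_j Pi m j x y = (x == y)%:R by move=> m; case: (hopt m) => [[]].
have sPsd : forall m j, psd (sigma m j) by move=> m j; case: (hens m) => h _; case: (h j).
have q0 : forall m j, 0 <= q m j by move=> m j; case: (hens m) => _ [].
have succ_prod : success (fun i : {dffun forall m : 'I_N, 'I_(k m)} => tensop (fun m => sigma m (i m)))
    (fun i : {dffun forall m : 'I_N, 'I_(k m)} => \prod_(m : 'I_N) q m (i m))
    (fun i : {dffun forall m : 'I_N, 'I_(k m)} => tensop (fun m => Pi m (i m)))
    = \prod_(m : 'I_N) success (sigma m) (q m) (Pi m).
  rewrite /success (prod_sum_dffun (fun m j => q m j * trace (mulop (Pi m j) (sigma m j)))).
  by apply: eq_bigr => i _; rewrite tr_tens_mul big_split.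
split.
  split.
    by move=> i; apply: (sosF_psd (psd_sos_tens _)) => m; apply: PiPsd.
  move=> x y; rewrite /tensop -(prod_sum_dffun (fun m j => Pi m j (x m) (y m))).
  under eq_bigr do rewrite PiSum.
  have [->|nxy] := eqVneq x y; first by rewrite big1 // => m _; rewrite eqxx.
  have [m hm] : exists m, x m != y m.
    apply/existsP; apply: contraT; rewrite negb_exists => /forallP h.
    suff: x = y by move/eqP: nxy.
    by apply/ffunP => m; apply/eqP; move: (h m); rewrite negbK.
  by rewrite (bigD1 m) //= (negbTE hm) mul0r.
move=> Pi' [Pi'Psd Pi'Sum].
rewrite succ_prod.
set H := fun m => Hop (sigma m) (q m) (Pi m).
have HD : forall m j, psd (fun x y => H m x y - q m j * sigma m j x y).
  by move=> m j; apply: Hop_psd.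
have -> : \prod_(m : 'I_N) success (sigma m) (q m) (Pi m) = trace (tensop H).
  by rewrite tr_tens; apply: eq_bigr => m _; rewrite Hop_trace.
have -> : trace (tensop H) = \sum_i trace (mulop (Pi' i) (tensop H)).
  rewrite /trace /mulop exchange_big /=; under [RHS]eq_bigr do rewrite exchange_big /=.
  under [RHS]eq_bigr do under eq_bigr do rewrite -mulr_suml Pi'Sum.
  by apply: eq_bigr => x _; rewrite (bigD1 x) //= eqxx mul1r big1 ?addr0 // => z /negbTE; rewrite eq_sym => ->; rewrite mul0r.
rewrite /success; apply: ler_sum => i _.
set R := fun m => (fun x y => q m (i m) * sigma m (i m) x y) : op 'I_(d m).
have -> : (\prod_(m : 'I_N) q m (i m)) * trace (mulop (Pi' i) (tensop (fun m => sigma m (i m))))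
    = trace (mulop (Pi' i) (tensop R)).
  rewrite /trace /mulop mulr_sumr; apply: eq_bigr => x _; rewrite mulr_sumr.
  by apply: eq_bigr => z _; rewrite /tensop /R big_split /=; ring.
rewrite -subr_ge0 tr_mul_sub.
pose F := fun (f : {ffun 'I_N -> bool}) (m : 'I_N) =>
  if f m then (fun x y => H m x y - R m x y) : op 'I_(d m) else R m.
pose f0 := [ffun m : 'I_N => false].
rewrite (@tr_mul_ext _ _ _ (fun x y => \sum_(f | f != f0) tensop (F f) x y)); last first.
  move=> x y; rewrite /tensop.
  have -> : \prod_(m : 'I_N) H m (x m) (y m) =
      \prod_(m : 'I_N) \sum_(b : bool) (if b then H m (x m) (y m) - R m (x m) (y m) else R m (x m) (y m)).
    by apply: eq_bigr => m _; rewrite big_bool /= subrK.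
  rewrite bigA_distr_bigA /= (bigD1 f0) //= addrC.
  have -> : \prod_(m : 'I_N) (if f0 m then H m (x m) (y m) - R m (x m) (y m) else R m (x m) (y m))
      = \prod_(m : 'I_N) R m (x m) (y m).
    by apply: eq_bigr => m _; rewrite /f0 ffunE.
  rewrite addrK; apply: eq_bigr => f _; apply: eq_bigr => m _; rewrite /F.
  by case: (f m).
rewrite tr_mul_sum; apply: sumr_ge0 => f _.
apply: (tr_psd_sosF (Pi'Psd i) (psd_sos_tens _)) => m.
rewrite /F; case: (f m).
  exact: HD.
by apply: psd_scale => //; apply: sPsd.
Qed.
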